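(* Assume $\theta_i<1$ for all $i$ and $\theta_j>0$ for some $j$. If $\theta_{\max}<1/2$, then for every $x(0)\in\Delta_n$ the trajectory $(V(k),x(k))$ of system (B) converges exponentially fast; in particular $x(k)$ converges exponentially to the unique equilibrium social power $x^*$, i.e. the unique $x^*\in\Delta_n$ with $x^*=(I_n-\Theta)(I_n-W(x^* )^T\Theta)^{-1}\mathbf 1_n/n$.
   Context: Let $n\ge 2$, $\mathbf 1_n$ the all-ones vector, $I_n$ the identity matrix, $\Delta_n=\{x\in\mathbb R^n: x\ge 0,\ \mathbf 1_n^Tx=1\}$. Let $C\in\mathbb R^{n\times n}$ be a nonnegative row-stochastic matrix with zero diagonal, $\theta=(\theta_1,\dots,\theta_n)\in[0,1]^n$, $\Theta=\mathrm{diag}(\theta)$, $\theta_{\max}=\max_j\theta_j$, and for $x\in\mathbb R^n$, $W(x)=\mathrm{diag}(x)+(I_n-\mathrm{diag}(x))C$. System (B): $V(k+1)=\Theta W(x(k))V(k)+I_n-\Theta$, $x(k+1)=V(k+1)^T\mathbf 1_n/n$, $k=0,1,2,\dots$, with $V(0)=I_n$ and $x(0)\in\Delta_n$. An equilibrium is a pair $(V^*,x^* )$ with $V^*$ row-stochastic, $x^*\in\Delta_n$, $V^*=\Theta W(x^* )V^*+I_n-\Theta$, $x^*=(V^* )^T\mathbf 1_n/n$; $x^*$ is its equilibrium social power. *)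

(* Defs.v *)
(* classical reals. Vectors in R^n are functions nat -> R,
   n x n matrices are functions nat -> nat -> R; only indices < n matter. *)
From Stdlib Require Import Reals Lra.
Open Scope R_scope.

Definition vec := nat -> R.
Definition mat := nat -> nat -> R.

Fixpoint rsum (n : nat) (f : nat -> R) : R :=
  match n with
  | O => 0
  | S m => rsum m f + f m
  end.

Definition delta (i j : nat) : R := if Nat.eqb i j then 1 else 0.

Definition in_simplex (n : nat) (x : vec) : Prop :=
  (forall i, (i < n)%nat -> 0 <= x i) /\ rsum n x = 1.

Definition row_stochastic (n : nat) (A : mat) : Prop :=
  (forall i j, (i < n)%nat -> (j < n)%nat -> 0 <= A i j) /\
  (forall i, (i < n)%nat -> rsum n (fun j => A i j) = 1).

Definition zero_diag (n : nat) (A : mat) : Prop :=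
  forall i, (i < n)%nat -> A i i = 0.

Definition Wmat (C : mat) (x : vec) : mat :=
  fun i j => delta i j * x i + (1 - x i) * C i j.

Definition stepV (n : nat) (C : mat) (theta : vec) (x : vec) (V : mat) : mat :=
  fun i j => theta i * rsum n (fun l => Wmat C x i l * V l j)
             + delta i j * (1 - theta i).

Definition social_power (n : nat) (V : mat) : vec :=
  fun j => rsum n (fun i => V i j) / INR n.

Fixpoint trajB (n : nat) (C : mat) (theta : vec) (x0 : vec) (k : nat) : mat * vec :=
  match k with
  | O => (delta, x0)
  | S k' =>
      let (V, x) := trajB n C theta x0 k' in
      let V' := stepV n C theta x V in
      (V', social_power n V')
  end.

Definition Vtraj n C theta x0 k := fst (trajB n C theta x0 k).
Definition xtraj n C theta x0 k := snd (trajB n C theta x0 k).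

Definition is_equilibrium (n : nat) (C : mat) (theta : vec) (Vs : mat) (xs : vec) : Prop :=
  row_stochastic n Vs /\ in_simplex n xs /\
  (forall i j, (i < n)%nat -> (j < n)%nat -> Vs i j = stepV n C theta xs Vs i j) /\
  (forall j, (j < n)%nat -> xs j = social_power n Vs j).

Definition mat_invertible (n : nat) (A : mat) : Prop :=
  forall y : vec, (forall i, (i < n)%nat -> rsum n (fun l => A i l * y l) = 0) ->
                  forall i, (i < n)%nat -> y i = 0.

Definition Mmat (C : mat) (theta : vec) (x : vec) : mat :=
  fun i j => delta i j - Wmat C x j i * theta j.

(* x = (I - Theta)(I - W(x)^T Theta)^{-1} 1_n / n, with the inverse existing:
   M invertible and x = (I - Theta) y where y is the (unique) solution of
   M y = 1_n / n. *)
Definition power_formula (n : nat) (C : mat) (theta : vec) (x : vec) : Prop :=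
  mat_invertible n (Mmat C theta x) /\
  exists y : vec,
    (forall i, (i < n)%nat -> rsum n (fun l => Mmat C theta x i l * y l) = 1 / INR n) /\
    (forall i, (i < n)%nat -> x i = (1 - theta i) * y i).

(* Main.v *)
Require Import Defs.
From Stdlib Require Import Reals Lra Lia ClassicalEpsilon.
Open Scope R_scope.

Lemma rsum_ext n f g : (forall i, (i<n)%nat -> f i = g i) -> rsum n f = rsum n g.
Proof. induction n; simpl; intros H; auto. rewrite IHn by (intros; apply H; lia). rewrite H by lia. auto. Qed.
Lemma rsum_plus n f g : rsum n (fun i => f i + g i) = rsum n f + rsum n g.
Proof. induction n; simpl; [lra| rewrite IHn; lra]. Qed.
Lemma rsum_scal n c f : rsum n (fun i => c * f i) = c * rsum n f.
Proof. induction n; simpl; [lra| rewrite IHn; lra]. Qed.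
Lemma rsum_minus n f g : rsum n (fun i => f i - g i) = rsum n f - rsum n g.
Proof. induction n; simpl; [lra| rewrite IHn; lra]. Qed.
Lemma rsum_le n f g : (forall i, (i<n)%nat -> f i <= g i) -> rsum n f <= rsum n g.
Proof. induction n; simpl; intros H; [lra|]. assert (f n <= g n) by (apply H; lia).
  assert (rsum n f <= rsum n g) by (apply IHn; intros; apply H; lia). lra. Qed.
Lemma rsum_nonneg n f : (forall i, (i<n)%nat -> 0 <= f i) -> 0 <= rsum n f.
Proof. intros H. replace 0 with (rsum n (fun _ => 0)). apply rsum_le; auto.
  clear H; induction n; simpl; auto; rewrite IHn; lra. Qed.
Lemma rsum_zero n f : (forall i, (i<n)%nat -> f i = 0) -> rsum n f = 0.
Proof. intros H. rewrite (rsum_ext n f (fun _ => 0)) by auto.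
  clear H; induction n; simpl; auto; rewrite IHn; lra. Qed.
Lemma rsum_abs n f : Rabs (rsum n f) <= rsum n (fun i => Rabs (f i)).
Proof. induction n; simpl. rewrite Rabs_R0; lra.
  eapply Rle_trans. apply Rabs_triang. lra. Qed.
Lemma rsum_const n c : rsum n (fun _ => c) = INR n * c.
Proof. induction n. simpl; lra. rewrite S_INR. cbn [rsum]. rewrite IHn. lra. Qed.
Lemma rsum_term n f i : (forall j, (j<n)%nat -> 0 <= f j) -> (i<n)%nat -> f i <= rsum n f.
Proof. induction n; intros H Hi; [lia|]. simpl.
  assert (0 <= rsum n f) by (apply rsum_nonneg; intros; apply H; lia).
  destruct (Nat.eq_dec i n). subst; lra.
  assert (f i <= rsum n f) by (apply IHn; [intros; apply H|]; lia).
  assert (0 <= f n) by (apply H; lia). lra. Qed.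

Lemma delta_sym i j : delta i j = delta j i.
Proof. unfold delta. rewrite Nat.eqb_sym. auto. Qed.
Lemma delta_eq i : delta i i = 1.
Proof. unfold delta. rewrite Nat.eqb_refl. auto. Qed.
Lemma delta_neq i j : i <> j -> delta i j = 0.
Proof. intros H. unfold delta. apply Nat.eqb_neq in H. rewrite H. auto. Qed.
Lemma delta_01 i j : 0 <= delta i j <= 1.
Proof. unfold delta. destruct (Nat.eqb i j); lra. Qed.

Lemma rsum_delta_l n i f : (i<n)%nat -> rsum n (fun l => delta i l * f l) = f i.
Proof. induction n; intros Hi; [lia|]. simpl. destruct (Nat.eq_dec i n).
  - subst. rewrite rsum_zero. rewrite delta_eq; lra. intros. rewrite delta_neq by lia. lra.
  - rewrite IHn by lia. rewrite delta_neq by lia. lra. Qed.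
Lemma rsum_delta_r n i f : (i<n)%nat -> rsum n (fun l => f l * delta l i) = f i.
Proof. intros. rewrite <- (rsum_delta_l n i f) by auto. apply rsum_ext. intros.
  rewrite delta_sym. lra. Qed.
Lemma rsum_swap n m f : rsum n (fun i => rsum m (fun j => f i j)) = rsum m (fun j => rsum n (fun i => f i j)).
Proof. induction n; simpl. symmetry; apply rsum_zero; auto.
  rewrite IHn. rewrite <- rsum_plus. auto. Qed.

Lemma lim_zero rho K a : 0 <= rho < 1 -> (forall k, a <= K * rho ^ k) -> a <= 0.
Proof. intros Hr H. destruct (Rle_lt_dec a 0); auto. exfalso.
  assert (HK: 0 < Rabs K + 1) by (pose proof (Rabs_pos K); lra).
  destruct (pow_lt_1_zero rho ltac:(rewrite Rabs_pos_eq; lra) (a / (Rabs K + 1)))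
    as [N HN]. apply Rdiv_lt_0_compat; lra.
  specialize (HN N (le_n N)). specialize (H N).
  rewrite Rabs_pos_eq in HN by (apply pow_le; lra).
  assert (K * rho ^ N <= Rabs K * rho ^ N).
  { apply Rmult_le_compat_r. apply pow_le; lra. apply RRle_abs. }
  assert ((Rabs K + 1) * rho ^ N < a).
  { apply (Rmult_lt_compat_l (Rabs K + 1)) in HN; auto.
    replace ((Rabs K + 1) * (a / (Rabs K + 1))) with a in HN by (field; lra). auto. }
  assert (0 <= rho ^ N) by (apply pow_le; lra). nra. Qed.

Lemma lim_eq rho K a b : 0 <= rho < 1 -> (forall k, Rabs (a - b) <= K * rho ^ k) -> a = b.
Proof. intros Hr H. assert (a - b <= 0).
  { apply (lim_zero rho K); auto. intros k. eapply Rle_trans. apply RRle_abs. auto. }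
  assert (b - a <= 0).
  { apply (lim_zero rho K); auto. intros k. eapply Rle_trans. apply RRle_abs. rewrite Rabs_minus_sym. auto. }
  lra. Qed.

Lemma geom_cauchy0 (u : nat -> R) A rho : 0 <= A -> 0 <= rho < 1 ->
  (forall k, Rabs (u (S k) - u k) <= A * rho ^ k) ->
  forall k m, Rabs (u (m + k)%nat - u k) <= A * rho ^ k * (1 - rho ^ m) / (1 - rho).
Proof. intros HA Hr H k m. induction m; simpl.
  - replace (u k - u k) with 0 by lra. rewrite Rabs_R0. right; field; lra.
  - replace (u (S (m + k)) - u k) with ((u (S (m+k)) - u (m+k)%nat) + (u (m+k)%nat - u k)) by ring.
    eapply Rle_trans. apply Rabs_triang.
    eapply Rle_trans. apply Rplus_le_compat. apply H. apply IHm.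
    rewrite pow_add. right. field. lra. Qed.
Lemma geom_cauchy (u : nat -> R) A rho : 0 <= A -> 0 <= rho < 1 ->
  (forall k, Rabs (u (S k) - u k) <= A * rho ^ k) ->
  forall k m, Rabs (u (m + k)%nat - u k) <= A * rho ^ k / (1 - rho).
Proof. intros HA Hr H k m. apply Rle_trans with (A * rho^k * (1 - rho^m)/(1-rho)). apply geom_cauchy0; auto.
  unfold Rdiv. apply Rmult_le_compat_r. apply Rlt_le, Rinv_0_lt_compat; lra.
  assert (0 <= rho ^ m) by (apply pow_le; lra). assert (0 <= A * rho^k) by (apply Rmult_le_pos; auto; apply pow_le; lra).
  nra. Qed.

Lemma pow_small rho K eps : 0 <= rho < 1 -> 0 <= K -> 0 < eps -> exists N, K * rho ^ N < eps.
Proof. intros Hr HK He.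
  destruct (pow_lt_1_zero rho ltac:(rewrite Rabs_pos_eq; lra) (eps / (K + 1)))
      as [N HN]. apply Rdiv_lt_0_compat; lra.
  exists N. specialize (HN N (le_n N)). rewrite Rabs_pos_eq in HN by (apply pow_le; lra).
  apply (Rmult_lt_compat_l (K + 1)) in HN; [|lra].
  replace ((K + 1) * (eps / (K + 1))) with eps in HN by (field; lra).
  assert (0 <= rho ^ N) by (apply pow_le; lra). nra. Qed.

Lemma geom_limit (u : nat -> R) A rho : 0 <= A -> 0 <= rho < 1 ->
  (forall k, Rabs (u (S k) - u k) <= A * rho ^ k) ->
  exists l, forall k, Rabs (u k - l) <= A * rho ^ k / (1 - rho).
Proof. intros HA Hr H.
  assert (HB: forall k m, (k <= m)%nat -> Rabs (u m - u k) <= A * rho ^ k / (1 - rho)).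
  { intros k m Hkm. replace m with ((m - k) + k)%nat by lia. apply geom_cauchy; auto. }
  assert (HA': 0 <= A / (1 - rho)) by (apply Rmult_le_pos; auto; apply Rlt_le, Rinv_0_lt_compat; lra).
  assert (Hc: Cauchy_crit u).
  { intros eps He.
    destruct (pow_small rho (A / (1 - rho)) (eps/2)) as [N HN]; auto; try lra.
    exists N. intros p q Hp Hq. unfold Rdist.
    replace (u p - u q) with ((u p - u N) - (u q - u N)) by ring.
    eapply Rle_lt_trans. apply Rabs_triang. rewrite Rabs_Ropp.
    assert (A * rho ^ N / (1 - rho) = (A / (1 - rho)) * rho ^ N) by (field; lra).
    pose proof (HB N p Hp). pose proof (HB N q Hq). lra. }
  destruct (R_complete u Hc) as [l Hl]. exists l. intros k.
  apply Rnot_lt_le. intros Hlt.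
  set (e := Rabs (u k - l) - A * rho ^ k / (1 - rho)).
  destruct (Hl e ltac:(unfold e; lra)) as [N HN].
  specialize (HN (Nat.max N k) ltac:(lia)). unfold Rdist in HN.
  pose proof (HB k (Nat.max N k) ltac:(lia)).
  assert (Rabs (u k - l) <= Rabs (u (Nat.max N k) - u k) + Rabs (u (Nat.max N k) - l)).
  { replace (u k - l) with (-(u (Nat.max N k) - u k) + (u (Nat.max N k) - l)) by ring.
    eapply Rle_trans. apply Rabs_triang. rewrite Rabs_Ropp. lra. }
  unfold e in HN. lra. Qed.

Definition mbound n (V V' : mat) r := forall i, (i<n)%nat -> rsum n (fun j => Rabs (V i j - V' i j)) <= r.
Definition mm n (A B : mat) : mat := fun i j => rsum n (fun k => A i k * B k j).

Lemma abs_sub_nonneg a b : 0 <= a -> 0 <= b -> Rabs (a - b) <= a + b.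
Proof. intros. unfold Rabs; destruct Rcase_abs; lra. Qed.

Lemma stoch_diff n V V' : row_stochastic n V -> row_stochastic n V' -> mbound n V V' 2.
Proof. intros [H1 H2] [H3 H4] i Hi.
  apply Rle_trans with (rsum n (fun j => V i j + V' i j)).
  apply rsum_le; intros; apply abs_sub_nonneg; auto.
  rewrite rsum_plus, H2, H4; auto; lra. Qed.

Lemma mbound_entry n V V' r i j : mbound n V V' r -> (i<n)%nat -> (j<n)%nat -> Rabs (V i j - V' i j) <= r.
Proof. intros H Hi Hj. eapply Rle_trans; [|apply (H i Hi)].
  apply (rsum_term n (fun j => Rabs (V i j - V' i j))); auto. intros; apply Rabs_pos. Qed.

Lemma mbound_nonneg n V V' r : (1 <= n)%nat -> mbound n V V' r -> 0 <= r.
Proof. intros Hn H. eapply Rle_trans; [|apply (H 0%nat); lia].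
  apply rsum_nonneg; intros; apply Rabs_pos. Qed.

Lemma entry_mbound n V V' e : (forall i j, (i<n)%nat -> (j<n)%nat -> Rabs (V i j - V' i j) <= e) ->
  mbound n V V' (INR n * e).
Proof. intros H i Hi. rewrite <- rsum_const. apply rsum_le; auto. Qed.

Lemma mm_diff_bound n A V V' r i : row_stochastic n A -> mbound n V V' r -> (i < n)%nat ->
  rsum n (fun j => Rabs (mm n A V i j - mm n A V' i j)) <= r.
Proof. intros [HA1 HA2] H Hi. unfold mm.
  apply Rle_trans with (rsum n (fun j => rsum n (fun l => A i l * Rabs (V l j - V' l j)))).
  { apply rsum_le; intros j Hj. rewrite <- rsum_minus.
    eapply Rle_trans. apply rsum_abs. apply rsum_le; intros l Hl.
    replace (A i l * V l j - A i l * V' l j) with (A i l * (V l j - V' l j)) by ring.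
    rewrite Rabs_mult, (Rabs_pos_eq (A i l)); auto. lra. }
  rewrite rsum_swap.
  apply Rle_trans with (rsum n (fun l => A i l * r)).
  { apply rsum_le; intros l Hl. rewrite rsum_scal. apply Rmult_le_compat_l; auto. }
  rewrite (rsum_ext n (fun l => A i l * r) (fun l => r * A i l)) by (intros; ring).
  rewrite rsum_scal, HA2; auto. lra. Qed.

Lemma prod_stoch n A V : row_stochastic n A -> row_stochastic n V -> row_stochastic n (mm n A V).
Proof. intros [HA1 HA2] [HV1 HV2]. split.
  - intros i j Hi Hj. apply rsum_nonneg; intros. apply Rmult_le_pos; auto.
  - intros i Hi. unfold mm. rewrite rsum_swap.
    rewrite (rsum_ext n _ (fun l => A i l)). apply HA2; auto.
    intros l Hl. rewrite rsum_scal. rewrite HV2; auto. ring. Qed.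

Lemma rsum_delta_const n i c : (i<n)%nat -> rsum n (fun l => delta i l * c) = c.
Proof. intros. apply (rsum_delta_l n i (fun _ => c)); auto. Qed.

Lemma simplex_le1 n x i : in_simplex n x -> (i<n)%nat -> 0 <= x i <= 1.
Proof. intros [H1 H2] Hi. split; auto. rewrite <- H2. apply rsum_term; auto. Qed.

Lemma W_stoch n C x : row_stochastic n C -> in_simplex n x -> row_stochastic n (Wmat C x).
Proof. intros [HC1 HC2] Hx. split.
  - intros i j Hi Hj. unfold Wmat. pose proof (delta_01 i j). pose proof (simplex_le1 n x i Hx Hi).
    pose proof (HC1 i j Hi Hj). nra.
  - intros i Hi. unfold Wmat. rewrite rsum_plus.
    rewrite rsum_delta_const by auto. rewrite rsum_scal, HC2 by auto. ring. Qed.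

Lemma WV_expand n C x (V : mat) i j : (i<n)%nat ->
  rsum n (fun l => Wmat C x i l * V l j) = x i * V i j + (1 - x i) * rsum n (fun l => C i l * V l j).
Proof. intros Hi. unfold Wmat.
  rewrite (rsum_ext n _ (fun l => delta i l * (x i * V l j) + (1 - x i) * (C i l * V l j))) by (intros; simpl; ring).
  rewrite rsum_plus, rsum_scal. f_equal.
  apply (rsum_delta_l n i (fun l => x i * V l j)); auto. Qed.

Lemma stepV_stoch n C theta x V : row_stochastic n C -> in_simplex n x ->
  (forall i, (i<n)%nat -> 0 <= theta i <= 1) -> row_stochastic n V ->
  row_stochastic n (stepV n C theta x V).
Proof. intros HC Hx Ht HV.
  destruct (prod_stoch n (Wmat C x) V (W_stoch n C x HC Hx) HV) as [P1 P2]. split.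
  - intros i j Hi Hj. unfold stepV. pose proof (P1 i j Hi Hj). unfold mm in H.
    pose proof (Ht i Hi). pose proof (delta_01 i j). nra.
  - intros i Hi. unfold stepV. rewrite rsum_plus, rsum_scal.
    pose proof (P2 i Hi). unfold mm in H. rewrite H.
    rewrite rsum_delta_const by auto. ring. Qed.

Lemma sp_simplex n V : (1 <= n)%nat -> row_stochastic n V -> in_simplex n (social_power n V).
Proof. intros Hn [H1 H2]. assert (0 < INR n) by (apply lt_0_INR; lia). split.
  - intros i Hi. unfold social_power. apply Rmult_le_pos. apply rsum_nonneg; auto.
    apply Rlt_le, Rinv_0_lt_compat; auto.
  - unfold social_power. unfold Rdiv.
    rewrite (rsum_ext n _ (fun j => / INR n * rsum n (fun i => V i j))) by (intros; ring).
    rewrite rsum_scal, <- rsum_swap.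
    rewrite (rsum_ext n _ (fun _ => 1)) by (intros; apply H2; auto).
    rewrite rsum_const. field. lra. Qed.

Lemma half_bound n V V' r k i : row_stochastic n V -> row_stochastic n V' -> mbound n V V' r ->
  (k<n)%nat -> (i<n)%nat -> 2 * Rabs (V k i - V' k i) <= r.
Proof. intros [H1 H2] [H3 H4] H Hk Hi.
  set (D := fun j => V k j - V' k j).
  assert (HD: rsum n D = 0). { unfold D. rewrite rsum_minus, H2, H4; auto; lra. }
  assert (E: rsum n (fun j => Rabs (D j)) = rsum n (fun j => Rabs (D j - delta i j * D i)) + Rabs (D i)).
  { rewrite <- (rsum_delta_const n i (Rabs (D i))) by auto. rewrite <- rsum_plus.
    apply rsum_ext; intros j Hj. destruct (Nat.eq_dec i j).
    - subst. rewrite delta_eq. replace (D j - 1 * D j) with 0 by ring. rewrite Rabs_R0. ring.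
    - rewrite delta_neq by auto. replace (D j - 0 * D i) with (D j) by ring. ring. }
  assert (E2: Rabs (D i) <= rsum n (fun j => Rabs (D j - delta i j * D i))).
  { eapply Rle_trans; [|apply rsum_abs]. rewrite rsum_minus, rsum_delta_l, HD by auto.
    rewrite Rabs_minus_sym. replace (D i - 0) with (D i) by ring. lra. }
  specialize (H k Hk). fold D in H. unfold D in *. lra. Qed.

Lemma sp_diff n V V' r i : (1 <= n)%nat -> row_stochastic n V -> row_stochastic n V' -> mbound n V V' r ->
  (i<n)%nat -> 2 * Rabs (social_power n V i - social_power n V' i) <= r.
Proof. intros Hn HV HV' H Hi. assert (0 < INR n) by (apply lt_0_INR; lia).
  unfold social_power. unfold Rdiv. rewrite <- Rmult_minus_distr_r, <- rsum_minus.
  rewrite Rabs_mult, (Rabs_pos_eq (/ INR n)) by (apply Rlt_le, Rinv_0_lt_compat; auto).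
  assert (Rabs (rsum n (fun k => V k i - V' k i)) <= INR n * (r / 2)).
  { eapply Rle_trans. apply rsum_abs. rewrite <- rsum_const. apply rsum_le; intros k Hk.
    pose proof (half_bound n V V' r k i HV HV' H Hk Hi). lra. }
  apply (Rmult_le_compat_r (/ INR n)) in H1; [|apply Rlt_le, Rinv_0_lt_compat; auto].
  replace (INR n * (r / 2) * / INR n) with (r/2) in H1 by (field; lra). lra. Qed.

Lemma G_contr n C theta z V V' r t : row_stochastic n C -> in_simplex n z ->
  (forall i, (i<n)%nat -> 0 <= theta i <= t) -> mbound n V V' r ->
  mbound n (stepV n C theta z V) (stepV n C theta z V') (t * r).
Proof. intros HC Hz Ht H i Hi. unfold stepV.
  rewrite (rsum_ext n _ (fun j => theta i * Rabs (mm n (Wmat C z) V i j - mm n (Wmat C z) V' i j))).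
  2:{ intros j Hj. unfold mm. replace (theta i * rsum n (fun l => Wmat C z i l * V l j) + delta i j * (1 - theta i) -
     (theta i * rsum n (fun l => Wmat C z i l * V' l j) + delta i j * (1 - theta i))) with
     (theta i * (rsum n (fun l => Wmat C z i l * V l j) - rsum n (fun l => Wmat C z i l * V' l j))) by ring.
     rewrite Rabs_mult, Rabs_pos_eq; auto. destruct (Ht i Hi); auto. }
  rewrite rsum_scal. pose proof (mm_diff_bound n (Wmat C z) V V' r i (W_stoch n C z HC Hz) H Hi).
  destruct (Ht i Hi). assert (0 <= r).
  { eapply Rle_trans; [|apply (H i Hi)]. apply rsum_nonneg; intros; apply Rabs_pos. }
  nra. Qed.

Definition Fmap n C theta (V : mat) := stepV n C theta (social_power n V) V.

Lemma F_contr n C theta V V' r t : (1 <= n)%nat -> row_stochastic n C ->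
  (forall i, (i<n)%nat -> 0 <= theta i <= t) -> row_stochastic n V -> row_stochastic n V' ->
  mbound n V V' r -> mbound n (Fmap n C theta V) (Fmap n C theta V') (2 * t * r).
Proof. intros Hn HC Ht HV HV' H i Hi. unfold Fmap, stepV.
  set (x := social_power n V). set (x' := social_power n V').
  assert (Hx : in_simplex n x) by (apply sp_simplex; auto).
  assert (Hx' : in_simplex n x') by (apply sp_simplex; auto).
  rewrite (rsum_ext n _ (fun j => theta i * Rabs ((mm n (Wmat C x) V i j - mm n (Wmat C x) V' i j)
     + (x i - x' i) * (V' i j - mm n C V' i j)))).
  2:{ intros j Hj. unfold mm. rewrite !WV_expand by auto.
     replace (theta i * (x i * V i j + (1 - x i) * rsum n (fun l => C i l * V l j)) + delta i j * (1 - theta i) -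
       (theta i * (x' i * V' i j + (1 - x' i) * rsum n (fun l => C i l * V' l j)) + delta i j * (1 - theta i)))
     with (theta i * (x i * V i j + (1 - x i) * rsum n (fun l => C i l * V l j) -
       (x i * V' i j + (1 - x i) * rsum n (fun l => C i l * V' l j)) +
       (x i - x' i) * (V' i j - rsum n (fun l => C i l * V' l j)))) by ring.
     rewrite Rabs_mult, (Rabs_pos_eq (theta i)); auto. destruct (Ht i Hi); auto. }
  rewrite rsum_scal.
  pose proof (mm_diff_bound n (Wmat C x) V V' r i (W_stoch n C x HC Hx) H Hi).
  assert (H2 : rsum n (fun j => Rabs ((x i - x' i) * (V' i j - mm n C V' i j))) <= Rabs (x i - x' i) * 2).
  { rewrite (rsum_ext n _ (fun j => Rabs (x i - x' i) * Rabs (V' i j - mm n C V' i j))) by (intros; apply Rabs_mult).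
    rewrite rsum_scal. apply Rmult_le_compat_l. apply Rabs_pos.
    apply (stoch_diff n V' (mm n C V') HV' (prod_stoch n C V' HC HV') i Hi). }
  pose proof (sp_diff n V V' r i Hn HV HV' H Hi).
  assert (H4 : rsum n (fun j => Rabs (mm n (Wmat C x) V i j - mm n (Wmat C x) V' i j + (x i - x' i) * (V' i j - mm n C V' i j))) <= 2 * r).
  { eapply Rle_trans. apply rsum_le. intros j Hj. apply Rabs_triang. rewrite rsum_plus. change (2 * Rabs (x i - x' i) <= r) in H1. lra. }
  destruct (Ht i Hi). assert (0 <= r).
  { eapply Rle_trans; [|apply (H i Hi)]. apply rsum_nonneg; intros; apply Rabs_pos. }
  nra. Qed.

Lemma fixpt n (T : mat -> mat) rho : (1 <= n)%nat -> 0 < rho < 1 ->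
  (forall V, row_stochastic n V -> row_stochastic n (T V)) ->
  (forall V V' r, row_stochastic n V -> row_stochastic n V' -> mbound n V V' r -> mbound n (T V) (T V') (rho * r)) ->
  forall V0, row_stochastic n V0 ->
  exists L, row_stochastic n L /\ (forall i j, (i<n)%nat -> (j<n)%nat -> L i j = T L i j) /\
    forall k i j, (i<n)%nat -> (j<n)%nat -> Rabs (Nat.iter k T V0 i j - L i j) <= 2 / (1 - rho) * rho ^ k.
Proof. intros Hn Hr HT Hc V0 HV0.
  set (U := fun k => Nat.iter k T V0).
  assert (HS: forall k, row_stochastic n (U k)).
  { induction k; simpl; auto. }
  assert (Hstep: forall k, mbound n (U (S k)) (U k) (2 * rho ^ k)).
  { induction k. simpl pow. rewrite Rmult_1_r. apply stoch_diff; auto.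
    replace (2 * rho ^ S k) with (rho * (2 * rho ^ k)) by (simpl; ring).
    apply (Hc (U (S k)) (U k)); auto. }
  assert (Hex: forall p : nat * nat, exists l, ((fst p < n)%nat -> (snd p < n)%nat ->
     forall k, Rabs (U k (fst p) (snd p) - l) <= 2 * rho ^ k / (1 - rho))).
  { intros [i j]; simpl. destruct (Nat.lt_ge_cases i n); [|exists 0; intros; lia].
    destruct (Nat.lt_ge_cases j n); [|exists 0; intros; lia].
    destruct (geom_limit (fun k => U k i j) 2 rho) as [l Hl]; try lra.
    intros k. apply (mbound_entry n (U (S k)) (U k)); auto.
    exists l. intros _ _ k. apply Hl. }
  destruct (choice _ Hex) as [f Hf].
  set (L := fun i j => f (i, j)).
  set (B := 2 / (1 - rho)).
  assert (HB : 0 <= B) by (unfold B; apply Rmult_le_pos; [lra| apply Rlt_le, Rinv_0_lt_compat; lra]).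
  assert (HL: forall k i j, (i<n)%nat -> (j<n)%nat -> Rabs (U k i j - L i j) <= B * rho ^ k).
  { intros k i j Hi Hj. replace (B * rho ^ k) with (2 * rho ^ k / (1 - rho)) by (unfold B; field; lra).
    apply (Hf (i, j)); auto. }
  assert (HLm: forall k, mbound n (U k) L (INR n * (B * rho ^ k))).
  { intros k. apply entry_mbound. auto. }
  assert (HSL: row_stochastic n L).
  { split.
    - intros i j Hi Hj. cut (- L i j <= 0). lra. apply (lim_zero rho B). lra.
      intros k. pose proof (HL k i j Hi Hj). destruct (HS k) as [P1 _]. pose proof (P1 i j Hi Hj).
      pose proof (RRle_abs (U k i j - L i j)). lra.
    - intros i Hi. apply (lim_eq rho (INR n * B)). lra. intros k.
      destruct (HS k) as [_ P2]. rewrite <- (P2 i Hi). rewrite <- rsum_minus.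
      eapply Rle_trans. apply rsum_abs. rewrite Rmult_assoc.
      rewrite <- rsum_const. apply rsum_le; intros j Hj. rewrite Rabs_minus_sym. auto. }
  exists L. split; auto. split.
  - intros i j Hi Hj. apply (lim_eq rho (B * rho + rho * (INR n * B))). lra. intros k.
    replace (L i j - T L i j) with ((L i j - U (S k) i j) + (T (U k) i j - T L i j)) by (simpl; ring).
    eapply Rle_trans. apply Rabs_triang.
    rewrite Rmult_plus_distr_r. apply Rplus_le_compat.
    + rewrite Rabs_minus_sym. replace (B * rho * rho ^ k) with (B * rho ^ S k) by (simpl; ring). auto.
    + replace (rho * (INR n * B) * rho ^ k) with (rho * (INR n * (B * rho ^ k))) by ring.
      apply (mbound_entry n (T (U k)) (T L)); auto.
  - intros k i j Hi Hj. fold B. apply (HL k i j Hi Hj). Qed.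

Lemma rsum_mult_r n f c : rsum n f * c = rsum n (fun i => f i * c).
Proof. rewrite Rmult_comm, <- rsum_scal. apply rsum_ext; intros; ring. Qed.

Lemma mm_assoc n A B C i j : mm n (mm n A B) C i j = mm n A (mm n B C) i j.
Proof. unfold mm.
  rewrite (rsum_ext n (fun l => rsum n (fun k => A i k * B k l) * C l j)
     (fun l => rsum n (fun k => A i k * B k l * C l j))) by (intros; apply rsum_mult_r).
  rewrite rsum_swap. apply rsum_ext; intros k Hk. rewrite <- rsum_scal. apply rsum_ext; intros; ring. Qed.

Lemma theta_bound n (theta : vec) : (forall i, (i<n)%nat -> theta i < 1/2) ->
  exists t, 1/4 <= t < 1/2 /\ forall i, (i<n)%nat -> theta i <= t.
Proof. induction n; intros H.
  - exists (1/4). split. lra. intros; lia.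
  - destruct IHn as [t [Ht Hi]]. intros; apply H; lia.
    exists (Rmax t (theta n)). split.
    + split. eapply Rle_trans; [|apply Rmax_l]; lra. apply Rmax_lub_lt; [lra|apply H; lia].
    + intros i Hi'. destruct (Nat.eq_dec i n). subst; apply Rmax_r.
      eapply Rle_trans; [|apply Rmax_l]. apply Hi; lia. Qed.

Lemma delta_stoch n : row_stochastic n delta.
Proof. split. intros; apply delta_01. intros i Hi.
  rewrite (rsum_ext n _ (fun l => delta i l * 1)) by (intros; ring). apply rsum_delta_const; auto. Qed.

Lemma stepV_ext n C theta x y V i j : (forall k, (k<n)%nat -> x k = y k) -> (i<n)%nat ->
  stepV n C theta x V i j = stepV n C theta y V i j.
Proof. intros H Hi. unfold stepV, Wmat. rewrite H; auto. Qed.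

Lemma mbound_ext n V1 V2 W r : (forall i j, (i<n)%nat -> (j<n)%nat -> V1 i j = V2 i j) ->
  mbound n V1 W r -> mbound n V2 W r.
Proof. intros H H1 i Hi. rewrite <- (H1 i Hi). right. apply rsum_ext; intros; rewrite H; auto. Qed.

Lemma mbound_mono n V W r r' : mbound n V W r -> r <= r' -> mbound n V W r'.
Proof. intros H Hr i Hi. specialize (H i Hi). lra. Qed.

Lemma sp_entry n V V' i e : (1 <= n)%nat -> (forall k, (k<n)%nat -> Rabs (V k i - V' k i) <= e) ->
  Rabs (social_power n V i - social_power n V' i) <= e.
Proof. intros Hn H. assert (0 < INR n) by (apply lt_0_INR; lia).
  unfold social_power. unfold Rdiv. rewrite <- Rmult_minus_distr_r, <- rsum_minus.
  rewrite Rabs_mult, (Rabs_pos_eq (/ INR n)) by (apply Rlt_le, Rinv_0_lt_compat; auto).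
  assert (Rabs (rsum n (fun k => V k i - V' k i)) <= INR n * e).
  { eapply Rle_trans. apply rsum_abs. rewrite <- rsum_const. apply rsum_le; auto. }
  apply (Rmult_le_compat_r (/ INR n)) in H1; [|apply Rlt_le, Rinv_0_lt_compat; auto].
  replace (INR n * e * / INR n) with e in H1 by (field; lra). lra. Qed.

Lemma exists_max n (d : vec) : (1 <= n)%nat -> exists i0, (i0 < n)%nat /\ forall i, (i<n)%nat -> Rabs (d i) <= Rabs (d i0).
Proof. induction n; intros Hn. lia. destruct (Nat.eq_dec n 0).
  - subst. exists 0%nat. split. lia. intros i Hi. replace i with 0%nat by lia. lra.
  - destruct IHn as [i0 [Hi0 H]]. lia.
    destruct (Rle_lt_dec (Rabs (d n)) (Rabs (d i0))).
    + exists i0. split. lia. intros i Hi. destruct (Nat.eq_dec i n). subst; auto. apply H; lia.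
    + exists n. split. lia. intros i Hi. destruct (Nat.eq_dec i n). subst; lra.
      specialize (H i ltac:(lia)). lra. Qed.

Lemma inj_N n W theta t (d : vec) : (1 <= n)%nat -> row_stochastic n W -> t < 1 ->
  (forall i, (i<n)%nat -> 0 <= theta i <= t) ->
  (forall i, (i<n)%nat -> rsum n (fun k => (delta i k - theta i * W i k) * d k) = 0) ->
  forall i, (i<n)%nat -> d i = 0.
Proof. intros Hn [HW1 HW2] Ht Hth H.
  destruct (exists_max n d Hn) as [i0 [Hi0 Hm]].
  assert (E: d i0 = theta i0 * rsum n (fun k => W i0 k * d k)).
  { specialize (H i0 Hi0).
    rewrite (rsum_ext n _ (fun k => delta i0 k * d k - theta i0 * (W i0 k * d k))) in H by (intros; ring).
    rewrite rsum_minus, rsum_delta_l, rsum_scal in H by auto. lra. }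
  assert (Hb: Rabs (rsum n (fun k => W i0 k * d k)) <= Rabs (d i0)).
  { eapply Rle_trans. apply rsum_abs.
    apply Rle_trans with (rsum n (fun k => W i0 k * Rabs (d i0))).
    apply rsum_le; intros k Hk. rewrite Rabs_mult, Rabs_pos_eq by auto.
    apply Rmult_le_compat_l; auto.
    rewrite <- rsum_mult_r, HW2 by auto. lra. }
  assert (Rabs (d i0) <= t * Rabs (d i0)).
  { rewrite E at 1. rewrite Rabs_mult, Rabs_pos_eq by (destruct (Hth i0 Hi0); auto).
    destruct (Hth i0 Hi0). pose proof (Rabs_pos (rsum n (fun k => W i0 k * d k))).
    pose proof (Rabs_pos (d i0)). nra. }
  intros i Hi. pose proof (Hm i Hi). pose proof (Rabs_pos (d i0)). pose proof (Rabs_pos (d i)).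
  assert (Rabs (d i) = 0) by nra. destruct (Rcase_abs (d i)).
  rewrite Rabs_left in H4; lra. rewrite Rabs_right in H4; lra. Qed.

Lemma inj_M n W theta t (y : vec) : row_stochastic n W -> t < 1 ->
  (forall i, (i<n)%nat -> 0 <= theta i <= t) ->
  (forall i, (i<n)%nat -> rsum n (fun l => (delta i l - W l i * theta l) * y l) = 0) ->
  forall i, (i<n)%nat -> y i = 0.
Proof. intros [HW1 HW2] Ht Hth H.
  set (s := rsum n (fun i => Rabs (y i))).
  assert (Hs0 : 0 <= s) by (apply rsum_nonneg; intros; apply Rabs_pos).
  assert (Hyi: forall i, (i<n)%nat -> Rabs (y i) <= rsum n (fun l => W l i * (theta l * Rabs (y l)))).
  { intros i Hi. specialize (H i Hi).
    rewrite (rsum_ext n _ (fun l => delta i l * y l - W l i * theta l * y l)) in H by (intros; ring).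
    rewrite rsum_minus, rsum_delta_l in H by auto.
    replace (y i) with (rsum n (fun l => W l i * theta l * y l)) by lra.
    eapply Rle_trans. apply rsum_abs. apply rsum_le; intros l Hl.
    rewrite !Rabs_mult, (Rabs_pos_eq (W l i)), (Rabs_pos_eq (theta l)) by (auto; destruct (Hth l Hl); auto).
    lra. }
  assert (s <= t * s).
  { apply Rle_trans with (rsum n (fun i => rsum n (fun l => W l i * (theta l * Rabs (y l))))).
    apply rsum_le; auto. rewrite <- rsum_swap.
    rewrite (rsum_ext n _ (fun l => theta l * Rabs (y l))).
    2:{ intros l Hl. rewrite <- rsum_mult_r, HW2 by auto. ring. }
    unfold s. rewrite <- rsum_scal. apply rsum_le; intros l Hl. destruct (Hth l Hl).
    pose proof (Rabs_pos (y l)). nra. }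
  intros i Hi. assert (Rabs (y i) <= s) by (apply (rsum_term n (fun i => Rabs (y i))); auto; intros; apply Rabs_pos).
  assert (s = 0) by nra. pose proof (Rabs_pos (y i)).
  destruct (Rcase_abs (y i)). rewrite Rabs_left in H1; lra. rewrite Rabs_right in H1; lra. Qed.

Definition Nm C (theta : vec) x : mat := fun i j => delta i j - theta i * Wmat C x i j.

Lemma NV_fix n C theta x V i j : (i<n)%nat -> (j<n)%nat ->
  (forall i j, (i<n)%nat -> (j<n)%nat -> V i j = stepV n C theta x V i j) ->
  mm n (Nm C theta x) V i j = delta i j * (1 - theta i).
Proof. intros Hi Hj H. unfold mm, Nm.
  rewrite (rsum_ext n _ (fun k => delta i k * V k j - theta i * (Wmat C x i k * V k j))) by (intros; ring).
  rewrite rsum_minus, rsum_delta_l, rsum_scal by auto. rewrite H by auto. unfold stepV. ring. Qed.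

Lemma pf_exists n C theta t Vs : (1 <= n)%nat -> row_stochastic n C ->
  (forall i, (i<n)%nat -> 0 <= theta i <= t) -> t < 1 -> row_stochastic n Vs ->
  (forall i j, (i<n)%nat -> (j<n)%nat -> Vs i j = stepV n C theta (social_power n Vs) Vs i j) ->
  power_formula n C theta (social_power n Vs).
Proof. intros Hn HC Ht Ht1 HVs Hfix.
  set (xs := social_power n Vs).
  assert (Hxs : in_simplex n xs) by (apply sp_simplex; auto).
  assert (HW := W_stoch n C xs HC Hxs).
  assert (Hth1 : forall i, (i<n)%nat -> 0 < 1 - theta i) by (intros i Hi; destruct (Ht i Hi); lra).
  split.
  { intros y Hy. apply (inj_M n (Wmat C xs) theta t y); auto. }
  set (N := Nm C theta xs).
  set (P := fun k l => Vs k l / (1 - theta l)).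
  set (Q := mm n P N).
  assert (HNP: forall i j, (i<n)%nat -> (j<n)%nat -> mm n N P i j = delta i j).
  { intros i j Hi Hj. unfold mm, P.
    rewrite (rsum_ext n _ (fun k => N i k * Vs k j * / (1 - theta j))) by (intros; unfold Rdiv; ring).
    rewrite <- rsum_mult_r. fold (mm n N Vs i j). unfold N. rewrite NV_fix by auto.
    destruct (Nat.eq_dec i j). subst. rewrite delta_eq. field. specialize (Hth1 j Hj); lra.
    rewrite delta_neq by auto. ring. }
  assert (HNQ: forall i j, (i<n)%nat -> (j<n)%nat -> mm n N Q i j = N i j).
  { intros i j Hi Hj. unfold Q. rewrite <- mm_assoc. unfold mm at 1.
    rewrite (rsum_ext n _ (fun k => delta i k * N k j)).
    apply (rsum_delta_l n i (fun k => N k j)); auto.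
    intros k Hk. rewrite HNP; auto. }
  assert (HQ: forall k j, (k<n)%nat -> (j<n)%nat -> Q k j = delta k j).
  { intros k j Hk Hj.
    cut (Q k j - delta k j = 0). lra.
    apply (inj_N n (Wmat C xs) theta t (fun k => Q k j - delta k j) Hn HW Ht1 Ht); auto.
    intros i Hi.
    rewrite (rsum_ext n _ (fun k => N i k * Q k j - N i k * delta k j)) by (intros; unfold N, Nm; ring).
    rewrite rsum_minus. fold (mm n N Q i j). rewrite HNQ by auto.
    rewrite (rsum_delta_r n j (fun k => N i k)) by auto. ring. }
  exists (fun l => rsum n (fun k => P k l) / INR n).
  assert (0 < INR n) by (apply lt_0_INR; lia).
  split.
  - intros i Hi.
    rewrite (rsum_ext n _ (fun l => / INR n * rsum n (fun k => P k l * N l i))).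
    2:{ intros l Hl. assert (E: Mmat C theta xs i l = N l i) by (unfold Mmat, N, Nm; rewrite delta_sym; ring).
        rewrite E, <- rsum_mult_r. unfold Rdiv. ring. }
    rewrite rsum_scal, <- rsum_swap.
    rewrite (rsum_ext n _ (fun k => delta i k * 1)).
    rewrite rsum_delta_const by auto. field. lra.
    intros k Hk. fold (mm n P N k i). fold Q. rewrite HQ, delta_sym by auto. ring.
  - intros i Hi. unfold P. unfold Rdiv.
    rewrite <- rsum_mult_r. unfold xs, social_power. field. split. lra. specialize (Hth1 i Hi); lra. Qed.

Lemma traj_S n C theta x0 k :
  Vtraj n C theta x0 (S k) = stepV n C theta (xtraj n C theta x0 k) (Vtraj n C theta x0 k) /\
  xtraj n C theta x0 (S k) = social_power n (Vtraj n C theta x0 (S k)).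
Proof. unfold Vtraj, xtraj. simpl. destruct (trajB n C theta x0 k). simpl. split; reflexivity. Qed.

Lemma traj_iter n C theta x0 k :
  Vtraj n C theta x0 (S k) = Nat.iter k (Fmap n C theta) (Vtraj n C theta x0 1).
Proof. induction k. reflexivity.
  destruct (traj_S n C theta x0 (S k)) as [E1 _]. destruct (traj_S n C theta x0 k) as [_ E2].
  rewrite E1, E2. simpl. rewrite <- IHk. reflexivity. Qed.

Lemma stoch_le1 n V i j : row_stochastic n V -> (i<n)%nat -> (j<n)%nat -> 0 <= V i j <= 1.
Proof. intros [H1 H2] Hi Hj. split; auto. rewrite <- (H2 i Hi).
  apply (rsum_term n (fun j => V i j)); auto. Qed.

Lemma abs01 a b : 0 <= a <= 1 -> 0 <= b <= 1 -> Rabs (a - b) <= 1.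
Proof. intros. unfold Rabs; destruct Rcase_abs; lra. Qed.

Theorem theorem6 (n : nat) (C : mat) (theta : vec) (x0 : vec) :
  (2 <= n)%nat ->
  row_stochastic n C -> zero_diag n C ->
  (forall i, (i < n)%nat -> 0 <= theta i <= 1) ->
  (forall i, (i < n)%nat -> theta i < 1) ->
  (exists j, (j < n)%nat /\ 0 < theta j) ->
  (* theta_max < 1/2 *)
  (forall i, (i < n)%nat -> theta i < 1 / 2) ->
  in_simplex n x0 ->
  exists (Vs : mat) (xs : vec),
    is_equilibrium n C theta Vs xs /\
    (* xs is the unique equilibrium social power *)
    (forall (V' : mat) (x' : vec), is_equilibrium n C theta V' x' ->
       forall i, (i < n)%nat -> x' i = xs i) /\
    (* xs is the unique point of Delta_n satisfying the explicit formula *)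
    (in_simplex n xs /\ power_formula n C theta xs) /\
    (forall z : vec, in_simplex n z -> power_formula n C theta z ->
       forall i, (i < n)%nat -> z i = xs i) /\
    (* exponential convergence of the trajectory (V(k), x(k)) *)
    (exists (c rho : R), 0 <= c /\ 0 <= rho < 1 /\
       forall k : nat,
         (forall i j, (i < n)%nat -> (j < n)%nat ->
            Rabs (Vtraj n C theta x0 k i j - Vs i j) <= c * rho ^ k) /\
         (forall i, (i < n)%nat ->
            Rabs (xtraj n C theta x0 k i - xs i) <= c * rho ^ k)).
Proof.
  intros Hn2 HC _ Hth01 Hlt1 _ Hhalf Hx0.
  assert (Hn : (1 <= n)%nat) by lia.
  destruct (theta_bound n theta Hhalf) as [t [Ht Hti]].
  set (rho := 2 * t).
  assert (Hr : 0 < rho < 1) by (unfold rho; lra).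
  assert (Htt : forall i, (i<n)%nat -> 0 <= theta i <= t).
  { intros i Hi. split; [apply Hth01; auto | apply Hti; auto]. }
  assert (HFS : forall V, row_stochastic n V -> row_stochastic n (Fmap n C theta V)).
  { intros V HV. apply stepV_stoch; auto. apply sp_simplex; auto. }
  assert (HFc : forall V V' r, row_stochastic n V -> row_stochastic n V' -> mbound n V V' r ->
     mbound n (Fmap n C theta V) (Fmap n C theta V') (rho * r)).
  { intros V V' r HV HV' H. unfold rho. apply F_contr; auto. }
  assert (HV1 : row_stochastic n (Vtraj n C theta x0 1)).
  { change (row_stochastic n (stepV n C theta x0 delta)). apply stepV_stoch; auto. apply delta_stoch. }
  destruct (fixpt n (Fmap n C theta) rho Hn Hr HFS HFc _ HV1) as [Vs [HVs [Hfix Hconv]]].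
  set (xs := social_power n Vs).
  assert (Hxs : in_simplex n xs) by (apply sp_simplex; auto).
  assert (Huniq : forall V' x', is_equilibrium n C theta V' x' -> forall i, (i<n)%nat -> x' i = xs i).
  { intros V' x' [HV' [Hx' [Hf' Hsp']]] i Hi.
    assert (Hf'' : forall i j, (i<n)%nat -> (j<n)%nat -> V' i j = Fmap n C theta V' i j).
    { intros a b Ha Hb. rewrite Hf' by auto. unfold Fmap. apply stepV_ext; auto. }
    assert (Hb : forall k, mbound n V' Vs (2 * rho ^ k)).
    { induction k. simpl. rewrite Rmult_1_r. apply stoch_diff; auto.
      replace (2 * rho ^ S k) with (rho * (2 * rho ^ k)) by (simpl; ring).
      intros a Ha. eapply Rle_trans; [|apply (HFc V' Vs (2 * rho ^ k) HV' HVs IHk a Ha)].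
      right. apply rsum_ext; intros b Hb. rewrite <- Hf'', <- Hfix; auto. }
    rewrite Hsp' by auto. unfold xs, social_power. f_equal. apply rsum_ext; intros k Hk.
    apply (lim_eq rho 2). lra. intros m. apply (mbound_entry n V' Vs); auto. }
  exists Vs, xs.
  assert (Heq : is_equilibrium n C theta Vs xs).
  { split; auto. }
  split; auto. split; auto. split.
  { split; auto. apply (pf_exists n C theta t Vs); auto. lra. }
  split.
  { intros z Hz [_ [y [Hy Hzy]]].
    destruct (fixpt n (stepV n C theta z) rho Hn Hr) with (V0 := delta) as [V' [HV' [Hf' _]]].
    { intros V HV. apply stepV_stoch; auto. }
    { intros V V' r HV HV' H. apply mbound_mono with (t * r).
      apply G_contr; auto. pose proof (mbound_nonneg n V V' r Hn H). unfold rho; nra. }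
    { apply delta_stoch. }
    apply (Huniq V'). split; auto. split; auto. split; auto.
    intros j Hj. assert (0 < INR n) by (apply lt_0_INR; lia).
    unfold social_power. unfold Rdiv. rewrite rsum_mult_r.
    rewrite (rsum_ext n _ (fun k => rsum n (fun l => Mmat C theta z k l * y l) * V' k j)).
    2:{ intros k Hk. rewrite Hy by auto. unfold Rdiv. ring. }
    rewrite (rsum_ext n _ (fun k => rsum n (fun l => y l * (Nm C theta z l k * V' k j)))).
    2:{ intros k Hk. rewrite rsum_mult_r. apply rsum_ext; intros l Hl.
        unfold Mmat, Nm. rewrite delta_sym. ring. }
    rewrite rsum_swap.
    rewrite (rsum_ext n _ (fun l => (y l * (1 - theta l)) * delta l j)).
    2:{ intros l Hl. rewrite rsum_scal. fold (mm n (Nm C theta z) V' l j).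
        rewrite NV_fix by auto. rewrite delta_sym. ring. }
    rewrite (rsum_delta_r n j (fun l => y l * (1 - theta l))) by auto. rewrite Hzy by auto. ring. }
  set (B := 2 / (1 - rho)).
  assert (HB : 0 <= B) by (unfold B; apply Rmult_le_pos; [lra| apply Rlt_le, Rinv_0_lt_compat; lra]).
  exists (B / rho + 2), rho.
  assert (HBr : 0 <= B / rho) by (apply Rmult_le_pos; [lra| apply Rlt_le, Rinv_0_lt_compat; lra]).
  split. lra. split. lra.
  assert (Hkey : forall m, B * rho ^ m <= (B / rho + 2) * rho ^ S m).
  { intros m. simpl. assert (0 <= rho ^ m) by (apply pow_le; lra).
    replace ((B / rho + 2) * (rho * rho ^ m)) with (B * rho ^ m + 2 * rho * rho ^ m) by (field; lra).
    nra. }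
  intros k. destruct k as [|m].
  - simpl. rewrite Rmult_1_r. split.
    + intros i j Hi Hj. apply Rle_trans with 1; [|lra].
      apply abs01. apply delta_01. apply stoch_le1 with n; auto.
    + intros i Hi. apply Rle_trans with 1; [|lra].
      apply abs01. apply simplex_le1 with n; auto. apply simplex_le1 with n; auto.
  - split.
    + intros i j Hi Hj. eapply Rle_trans; [|apply Hkey]. rewrite traj_iter. unfold B. apply Hconv; auto.
    + intros i Hi. eapply Rle_trans; [|apply Hkey]. destruct (traj_S n C theta x0 m) as [_ E2].
      rewrite E2. apply sp_entry; auto. intros k Hk. rewrite traj_iter. unfold B. apply Hconv; auto.
Qed.
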